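(* Let $G=(V_1,V_2,E)$ be a biregular graph. Then $\mathcal{A}(G)\cong\mathcal{A}_{RW}(G)$.
   Context: Graphs are simple (no loops or multiple edges), connected, with countable (finite or infinite) vertex set $V$, and locally finite ($\deg(i)<\infty$ for all $i$, where $\deg(i)$ is the number of neighbors of $i$). The adjacency matrix is $A=(a_{ij})$ with $a_{ij}=1$ if $i,j$ are neighbors and $0$ otherwise. A graph is biregular if it is bipartite with bipartition $V=V_1\sqcup V_2$ (every edge joins $V_1$ to $V_2$) such that all vertices of $V_1$ have a common degree $d_1$ and all vertices of $V_2$ have a common degree $d_2$. An evolution algebra over $\mathbb{R}$ is an algebra with a countable basis $\{e_i\}$ (natural basis) such that $e_i\cdot e_j=0$ for $i\ne j$ and $e_i\cdot e_i=\sum_k c_{ik}e_k$. $\mathcal{A}(G)$ has natural basis $\{e_i:i\in V\}$ with $e_i\cdot e_i=\sum_{k\in V}a_{ik}e_k$; $\mathcal{A}_{RW}(G)$ has natural basis $\{e_i:i\in V\}$ with $e_i\cdot e_i=\sum_{k\in V}\frac{a_{ik}}{\deg(i)}e_k$; in both, $e_i\cdot e_j=0$ for $i\ne j$. $\cong$ denotes algebra isomorphism. *)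

(* Defs.v *)
From HB Require Import structures.
From mathcomp Require Import all_boot all_order all_algebra.
From mathcomp Require Import boolp classical_sets functions cardinality fsbigop.
From mathcomp Require Import finmap reals Rstruct.
From Stdlib Require Import Rdefinitions.
Set Implicit Arguments. Unset Strict Implicit. Unset Printing Implicit Defensive.
Import Order.TTheory GRing.Theory Num.Theory.
Local Open Scope classical_set_scope.
Local Open Scope ring_scope.

Section Graphs.
Variable V : countType.
Implicit Type adj : rel V.

(* simple: symmetric, no loops (multiple edges impossible for a relation) *)
Definition simple_graph adj := symmetric adj /\ irreflexive adj.

Definition neighbors adj (i : V) : set V := [set j | adj i j].

Definition locally_finite adj := forall i : V, finite_set (neighbors adj i).

Definition connected_graph adj :=
  forall i j : V, exists p : seq V, path adj i p /\ last i p = j.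

Definition deg adj (i : V) : nat := (#|` fset_set (neighbors adj i) |)%fset.

Definition biregular adj :=
  exists (V1 : set V) (d1 d2 : nat),
    (forall i j, adj i j -> (V1 i <-> ~ V1 j)) /\
    (forall i, V1 i -> deg adj i = d1) /\
    (forall i, ~ V1 i -> deg adj i = d2).

(* An element sum_i x_i e_i is represented by its finitely supported
   coefficient function x : V -> R. *)
Definition finsupp (x : V -> R) := finite_set [set i | x i != 0].

(* e_i e_j = 0 (i <> j), e_i e_i = sum_k c i k e_k; hence
   (sum x_i e_i)(sum y_j e_j) = sum_k (sum_i x_i y_i c_ik) e_k. *)
Definition ev_mul (c : V -> V -> R) (x y : V -> R) : V -> R :=
  fun k => \sum_(i \in [set i | x i != 0]) (x i * y i * c i k).

Definition c_adj adj : V -> V -> R := fun i k => if adj i k then 1 else 0.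
Definition c_rw adj : V -> V -> R :=
  fun i k => (if adj i k then 1 else 0) / (deg adj i)%:R.

Definition ev_alg_iso (c1 c2 : V -> V -> R) :=
  exists f : (V -> R) -> (V -> R),
    [/\ (forall x, finsupp x -> finsupp (f x)),
        (forall (a : R) x y, finsupp x -> finsupp y ->
            f (fun k => a * x k + y k) = (fun k => a * f x k + f y k)),
        (forall x y, finsupp x -> finsupp y -> f x = f y -> x = y),
        (forall z, finsupp z -> exists2 x, finsupp x & f x = z) &
        (forall x y, finsupp x -> finsupp y ->
            f (ev_mul c1 x y) = ev_mul c2 (f x) (f y))].

End Graphs.

(* Main.v *)
Require Import Defs.
From mathcomp Require Import all_boot all_order all_algebra.
From mathcomp Require Import boolp classical_sets cardinality.
From Stdlib Require Import Rdefinitions Rpower Reals Lra.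
From mathcomp Require Import fsbigop finmap reals Rstruct ring.
Import Order.TTheory GRing.Theory Num.Theory.
Local Open Scope classical_set_scope.
Local Open Scope ring_scope.

Lemma cube_root (x : R) : 0 < x -> exists p : R, 0 < p /\ p ^+ 3 = x.
Proof.
move=> /RltP x0; set p := Rpower x (1/3); exists p; split.
  apply/RltP; rewrite /Rpower; apply: exp_pos.
have -> : p ^+ 3 = p * (p * p) by [].
rewrite -!RmultE /p -!Rpower_plus.
rewrite (_ : (1/3 + (1/3 + 1/3))%R = 1%R); last by lra.
by rewrite Rpower_1.
Qed.

Lemma deg_gt0 (V : countType) (adj : rel V) i k :
  locally_finite adj -> adj i k -> leq 1 (deg adj i).
Proof.
move=> lf h; rewrite /deg cardfs_gt0; apply/fset0Pn; exists k.
rewrite in_fset_set // ?inE /=; exact/mem_set.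
Qed.

Theorem proposition2p10 (V : countType) (adj : rel V) :
  simple_graph adj -> locally_finite adj -> connected_graph adj ->
  biregular adj ->
  ev_alg_iso (c_adj adj) (c_rw adj).
Proof.
move=> _ lf _ [V1 [d1 [d2 [hbip [hd1 hd2]]]]].
have [p [p0 p3]] : exists p : R, 0 < p /\ p ^+ 3 = (maxn d1 1)%:R.
  by apply: cube_root; rewrite ltr0n leq_max orbT.
have [q [q0 q3]] : exists q : R, 0 < q /\ q ^+ 3 = (maxn d2 1)%:R.
  by apply: cube_root; rewrite ltr0n leq_max orbT.
have pn0 : p != 0 by rewrite gt_eqF.
have qn0 : q != 0 by rewrite gt_eqF.
pose al i := if asbool (V1 i) then p ^+ 2 * q else p * q ^+ 2.
have al0 i : al i != 0.
  by rewrite /al; case: asboolP => _; rewrite !mulf_neq0 ?expf_neq0.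
have key i k : adj i k -> al k = al i ^+ 2 / (deg adj i)%:R.
  move=> h; have dg := @deg_gt0 V adj i k lf h; have /= hb := hbip i k h.
  rewrite /al; case: (asboolP (V1 i)) => Vi.
    have nVk : ~ V1 k by apply/hb.
    case: asboolP => // _.
    rewrite hd1 // in dg *; rewrite -[d1](maxn_idPl dg) -p3.
    by field.
  have Vk : V1 k by apply: contrapT => nVk; apply: Vi; apply/hb.
  case: asboolP => // _.
  rewrite hd2 // in dg *; rewrite -[d2](maxn_idPl dg) -q3.
  by field.
have supp_eq (x : V -> R) : [set i | al i * x i != 0] = [set i | x i != 0].
  by apply/seteqP; split=> i /=; rewrite mulf_eq0 negb_or al0.
exists (fun x k => al k * x k); split.
- by move=> x; rewrite /Defs.finsupp supp_eq.
- by move=> a x y _ _; apply/funext => k; ring.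
- move=> x y _ _ E; apply/funext => k.
  by apply: (mulfI (al0 k)); exact: (congr1 (fun f => f k) E).
- move=> z fz; exists (fun k => z k / al k).
    rewrite /Defs.finsupp; have -> : [set i | z i / al i != 0] = [set i | z i != 0].
      by apply/seteqP; split=> i /=; rewrite mulf_eq0 negb_or invr_eq0 al0 ?andbT.
    exact: fz.
  by apply/funext => k; rewrite mulrC divfK.
- move=> x y fx fy; apply/funext => k; rewrite /ev_mul supp_eq.
  rewrite fsbig_distrr //; apply: eq_fsbigr => i _.
  rewrite /c_adj /c_rw; case: (boolP (adj i k)) => h.
    by rewrite (key i k h) /=; ring.
  by rewrite /= !mul0r !mulr0.
Qed.
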